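(* Let $L$, $\rho$ and the notions below be as in the context, let $\lambda_9\in\Lambda$ be a vector of norm $9$, and let $s=(\lambda_9;\theta,-1)$. Let $p$ be the point of $s^\perp$ nearest $\rho$, and let $B=\{x\in\mathbb{C}H^{13}:\mathrm{ht}_\rho(x)<\mathrm{ht}_\rho(p)\}$ be the open horoball centered at $\rho$ whose bounding horosphere is tangent to $s^\perp$ at $p$. Then there exist an open ball $U$ around $p$ with $U\cap\mathcal{H}=U\cap\mathcal{H}_p$, and a triflection $R$ in a Leech root, such that $B\cap R(B)\cap U\neq\emptyset$ and $R(B)\cap U\cap s^\perp\neq\emptyset$.
   Context: Let $\omega$ be a primitive cube root of unity, $\mathcal{E}=\mathbb{Z}[\omega]$, $\theta=\omega-\bar\omega=\sqrt{-3}$. Hermitian forms are linear in the first argument and antilinear in the second; $v^2=\langle v,v\rangle$. $\Lambda$ is the complex Leech lattice, an $\mathcal{E}$-lattice of rank 12 whose underlying real lattice is a scaled Leech lattice, scaled to have minimal norm $6$ (all inner products in $\theta\mathcal{E}$, $\Lambda=\theta\Lambda^*$). $L=\Lambda\oplus\mathcal{E}^2$, vectors $(x;y,z)$ with $x\in\Lambda$, $y,z\in\mathcal{E}$, and $\langle(x;y,z),(x';y',z')\rangle=\langle x,x'\rangle_\Lambda+\bar\theta y\bar z'+\theta z\bar y'$; signature $(13,1)$; $\mathbb{C}H^{13}$ is the set of negative-definite lines in $L\otimes_{\mathcal{E}}\mathbb{C}$ with its complex hyperbolic metric. A root is a vector of $L$ of norm $3$; $s^\perp$ is the corresponding hyperplane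 in $\mathbb{C}H^{13}$; $\mathcal{H}$ is the union of all such hyperplanes and $\mathcal{H}_p$ the union of those containing $p$. $\rho=(0;0,1)$. For $x\in\mathbb{C}H^{13}$ represented by $w$, $\mathrm{ht}_\rho(x)=-|\langle \rho,w\rangle|^2/w^2$. A Leech root is a root $l$ with $|\langle\rho,l\rangle|^2=3$. A triflection in a root $l$ is a map $x\mapsto x-(1-\zeta)\frac{\langle x,l\rangle}{3}l$ with $\zeta\in\{\omega,\bar\omega\}$. The point of $s^\perp$ nearest $\rho$ is the point represented by $\rho-\tfrac13\langle\rho,s\rangle s$ (the point of $s^\perp$ minimizing $\mathrm{ht}_\rho$). *)

(* Defs.v *)
From HB Require Import structures.
From mathcomp Require Import all_boot all_order all_algebra.
From mathcomp Require Import complex.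
From mathcomp Require Import reals sequences exp.
Set Implicit Arguments. Unset Strict Implicit. Unset Printing Implicit Defensive.
Import Order.TTheory GRing.Theory Num.Theory.
Local Open Scope ring_scope.
Local Open Scope complex_scope.

Section Defs.
Variable R : realType.
Local Notation C := (R[i]).

(* omega = exp(2 pi i/3), theta = omega - conj omega = sqrt(-3) *)
Definition omega : C := (- (1 / 2%:R)) +i* (Num.sqrt (3%:R : R) / 2%:R).
Definition theta : C := omega - omega^*.

Definition inE (z : C) : Prop := exists a b : int, z = a%:~R + b%:~R * omega.
Definition inEv n (v : 'rV[C]_n) : Prop := forall i, inE (v 0 i).

Definition herm n (G : 'M[C]_n) (x y : 'rV[C]_n) : C :=
  \sum_(i < n) \sum_(j < n) x 0 i * G i j * (y 0 j)^*.

(* G is the Gram matrix (w.r.t. an E-basis) of the complex Leech lattice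
   Lambda = E^12: hermitian, positive definite, all inner products in theta E,
   Lambda = theta Lambda^*, minimal norm 6. *)
Definition leech_dual (G : 'M[C]_12) (w : 'rV[C]_12) : Prop :=
  forall v, inEv v -> inE (herm G w v).

Definition is_complex_Leech_gram (G : 'M[C]_12) : Prop :=
  [/\ (forall i j, G j i = (G i j)^*),
      (forall x : 'rV[C]_12, x != 0 -> 0 < complex.Re (herm G x x)),
      (forall u v, inEv u -> inEv v -> exists e, inE e /\ herm G u v = theta * e),
      (forall w, leech_dual G w -> inEv (theta *: w)) /\
      (forall v, inEv v -> exists w, leech_dual G w /\ v = theta *: w)
    & (forall v, inEv v -> v != 0 -> 6%:R <= complex.Re (herm G v v)) /\
      (exists v, inEv v /\ herm G v v = 6%:R)].

(* vectors (x; y, z) of L (x) C = (Lambda (x) C) + C^2 *)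
Record Lvec := mkL { lx : 'rV[C]_12; ly : C; lz : C }.

Definition Ladd (u v : Lvec) := mkL (lx u + lx v) (ly u + ly v) (lz u + lz v).
Definition Lscale (c : C) (u : Lvec) := mkL (c *: lx u) (c * ly u) (c * lz u).
Definition Lsub (u v : Lvec) := Ladd u (Lscale (-1) v).

Definition Lform (G : 'M[C]_12) (u v : Lvec) : C :=
  herm G (lx u) (lx v) + theta^* * ly u * (lz v)^* + theta * lz u * (ly v)^*.

Definition inL (u : Lvec) : Prop := [/\ inEv (lx u), inE (ly u) & inE (lz u)].

Definition rho : Lvec := mkL 0 0 1.

Definition is_root G (r : Lvec) : Prop := inL r /\ Lform G r r = 3%:R.
Definition is_Leech_root G (l : Lvec) : Prop :=
  is_root G l /\ Lform G rho l * (Lform G rho l)^* = 3%:R.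

Definition triflection G (l : Lvec) (zeta : C) (x : Lvec) : Lvec :=
  Lsub x (Lscale ((1 - zeta) * Lform G x l / 3%:R) l).

(* a vector represents a point of CH^13 iff it has negative norm *)
Definition negv G (w : Lvec) : Prop := complex.Re (Lform G w w) < 0.

Definition ht G (w : Lvec) : R :=
  - complex.Re (Lform G rho w * (Lform G rho w)^*) / complex.Re (Lform G w w).

(* complex hyperbolic distance: cosh^2(d(x,y)/2) = |<x,y>|^2/(x^2 y^2) *)
Definition coshR (t : R) : R := (expR t + expR (- t)) / 2%:R.
Definition chball G (p : Lvec) (r : R) (x : Lvec) : Prop :=
  negv G x /\
  complex.Re (Lform G x p * Lform G p x) / (complex.Re (Lform G x x) * complex.Re (Lform G p p))
    < coshR (r / 2%:R) ^+ 2.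

Definition nearest_point G (s : Lvec) : Lvec :=
  Lsub rho (Lscale (Lform G rho s / 3%:R) s).

End Defs.

(* Main.v *)
Require Import Defs.
From HB Require Import structures.
From mathcomp Require Import all_boot all_order all_algebra.
From mathcomp Require Import complex.
From mathcomp Require Import reals sequences exp.
From mathcomp Require Import ring lra zify.
Import Order.TTheory GRing.Theory Num.Theory.

Module PS.
Set Implicit Arguments. Unset Strict Implicit.
Local Open Scope ring_scope.
Local Open Scope complex_scope.


Section CW.
Variable R : realType.
Local Notation C := (R[i]).
Definition sq3 : R := Num.sqrt 3%:R.
Lemma sq3E : sq3 * sq3 = 3%:R.
Proof. by rewrite /sq3 -expr2 sqr_sqrtr // ler0n. Qed.

Definition cw (a b : R) : C := a%:C + b%:C * omega R.

Lemma cwE a b : cw a b = (a - b / 2%:R) +i* (b * sq3 / 2%:R).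
Proof.
rewrite /cw /omega -/sq3 /=; simpc.
apply/eqP; rewrite eq_complex /=; apply/andP; split; apply/eqP; ring.
Qed.

Lemma cwD a b c d : cw a b + cw c d = cw (a + c) (b + d).
Proof. rewrite !cwE; simpc; apply/eqP; rewrite eq_complex /=; apply/andP; split; apply/eqP; by field. Qed.

Lemma cwN a b : - cw a b = cw (- a) (- b).
Proof. rewrite !cwE; simpc; apply/eqP; rewrite eq_complex /=; apply/andP; split; apply/eqP; by field. Qed.

Lemma cwM a b c d : cw a b * cw c d = cw (a * c - b * d) (a * d + b * c - b * d).
Proof.
rewrite !cwE; simpc; apply/eqP; rewrite eq_complex /=; apply/andP; split; apply/eqP.
  have h : b * sq3 / 2%:R * (d * sq3 / 2%:R) = b * d * (sq3 * sq3) / 4%:R by field.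
  by rewrite h sq3E; field.
by field.
Qed.

Lemma cwJ a b : Num.conj (cw a b) = cw (a - b) (- b).
Proof. rewrite -[Num.conj _]/(conjc _) !cwE; simpc; apply/eqP; rewrite eq_complex /=; apply/andP; split; apply/eqP; by field. Qed.

Lemma cwV a : (cw a 0)^-1 = cw a^-1 0.
Proof. by rewrite /cw !mul0r !addr0 fmorphV. Qed.

Lemma cw_nat n : (n%:R : C) = cw n%:R 0.
Proof. by rewrite /cw mul0r addr0 rmorph_nat. Qed.
Lemma cw0 : (0 : C) = cw 0 0.
Proof. by rewrite /cw mul0r addr0. Qed.
Lemma cw1 : (1 : C) = cw 1 0.
Proof. by rewrite /cw mul0r addr0. Qed.
Lemma omegaE : omega R = cw 0 1.
Proof. by rewrite /cw mul1r add0r. Qed.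
Lemma thetaE : theta R = cw 1 2%:R.
Proof. rewrite /theta omegaE cwJ cwN cwD; congr cw; ring. Qed.
Lemma Re_cw a b : complex.Re (cw a b) = a - b / 2%:R.
Proof. by rewrite cwE. Qed.
Lemma cw_int (a b : int) : cw a%:~R b%:~R = a%:~R + b%:~R * omega R.
Proof. by rewrite /cw !rmorph_int. Qed.
End CW.
Section Herm.
Variable R : realType.
Local Notation C := (R[i]).
Variables (n : nat) (G : 'M[C]_n).

Lemma hermDl x y z : herm G (x + y) z = herm G x z + herm G y z.
Proof.
rewrite /herm -big_split; apply: eq_bigr => i _; rewrite -big_split.
by apply: eq_bigr => j _; rewrite mxE !mulrDl.
Qed.
Lemma hermZl c x z : herm G (c *: x) z = c * herm G x z.
Proof.
rewrite /herm mulr_sumr; apply: eq_bigr => i _; rewrite mulr_sumr.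
by apply: eq_bigr => j _; rewrite mxE !mulrA.
Qed.
Lemma hermDr x y z : herm G x (y + z) = herm G x y + herm G x z.
Proof.
rewrite /herm -big_split; apply: eq_bigr => i _; rewrite -big_split.
by apply: eq_bigr => j _; rewrite mxE rmorphD /= mulrDr.
Qed.
Lemma hermZr c x z : herm G x (c *: z) = Num.conj c * herm G x z.
Proof.
rewrite /herm mulr_sumr; apply: eq_bigr => i _; rewrite mulr_sumr.
by apply: eq_bigr => j _; rewrite mxE rmorphM /= mulrCA.
Qed.
Lemma herm0l z : herm G 0 z = 0.
Proof. by rewrite -(scale0r 0) hermZl mul0r. Qed.
Lemma herm_sym (hG : forall i j, G j i = Num.conj (G i j)) x y :
  herm G y x = Num.conj (herm G x y).
Proof.
rewrite /herm rmorph_sum /= exchange_big /=; apply: eq_bigr => i _.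
rewrite rmorph_sum /=; apply: eq_bigr => j _.
by rewrite !rmorphM /= conjCK hG; ring.
Qed.
End Herm.

Section LV.
Variable R : realType.
Local Notation C := (R[i]).
Variable (G : 'M[C]_12).
Hypothesis hG : forall i j, G j i = Num.conj (G i j).

Lemma LformDl u v w : Lform G (Ladd u v) w = Lform G u w + Lform G v w.
Proof. rewrite /Lform /= hermDl; ring. Qed.
Lemma LformZl c u w : Lform G (Lscale c u) w = c * Lform G u w.
Proof. rewrite /Lform /= hermZl; ring. Qed.
Lemma Lform_sym u v : Lform G v u = Num.conj (Lform G u v).
Proof.
rewrite /Lform !rmorphD !rmorphM /= !conjCK (herm_sym hG).
rewrite /theta !(rmorphB, rmorphN, rmorphD) /= !conjCK; ring.
Qed.
Lemma LformDr u v w : Lform G w (Ladd u v) = Lform G w u + Lform G w v.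
Proof. by rewrite Lform_sym LformDl rmorphD /= -!Lform_sym. Qed.
Lemma LformZr c u w : Lform G w (Lscale c u) = Num.conj c * Lform G w u.
Proof. by rewrite Lform_sym LformZl rmorphM /= -!Lform_sym. Qed.
End LV.

End PS.
Import PS.

Module PA.
Set Implicit Arguments. Unset Strict Implicit.
Local Open Scope ring_scope.

Ltac cwnorm := rewrite ?omegaE ?thetaE ?cw_nat ?cw0 ?cw1;
  do ![rewrite cwD|rewrite cwN|rewrite cwM|rewrite cwJ|rewrite cwV].

Section PA.
Variable R : realType.
Local Notation C := (R[i]).
Variable (G : 'M[C]_12).
Hypothesis hG : forall i j, G j i = Num.conj (G i j).
Hypothesis hpos : forall x : 'rV[C]_12, x != 0 -> 0 < complex.Re (herm G x x).

Lemma conjE (a b : R) : Num.conj (a +i* b)%C = (a +i* (- b))%C.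
Proof. by []. Qed.

Lemma Re_ge0 (z : C) : 0 <= z -> 0 <= complex.Re z.
Proof. by rewrite lecE => /andP[]. Qed.

Lemma herm_ge0 x : 0 <= complex.Re (herm G x x).
Proof.
have [->|nz] := eqVneq x 0; first by rewrite herm0l.
exact: ltW (hpos nz).
Qed.

Lemma thetaJ : Num.conj (theta R) = - theta R.
Proof. by cwnorm; congr cw; ring. Qed.
Lemma theta2 : theta R * theta R = - 3%:R.
Proof. by cwnorm; congr cw; ring. Qed.

Lemma W_pos v : lz v + theta R * ly v = 0 -> 0 <= complex.Re (Lform G v v).
Proof.
move=> hv; have hz : lz v = - (theta R * ly v) by rewrite -(subr0 (lz v)) -hv; ring.
have -> : Lform G v v = herm G (lx v) (lx v) + 6%:R * (ly v * Num.conj (ly v)).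
  rewrite /Lform hz rmorphN rmorphM /= thetaJ.
  have h3 := theta2.
  transitivity (herm G (lx v) (lx v) - (theta R * theta R) * (ly v * Num.conj (ly v)) * 2%:R).
    ring.
  rewrite h3; ring.
rewrite raddfD /= addr_ge0 ?herm_ge0 //; apply: Re_ge0.
by rewrite mulr_ge0 ?ler0n ?mul_conjC_ge0.
Qed.

Lemma Lsub_expand u v w : Lform G (Lsub u v) w = Lform G u w - Lform G v w.
Proof. by rewrite /Lsub LformDl LformZl mulN1r. Qed.
Lemma Lsub_expandr u v w : Lform G w (Lsub u v) = Lform G w u - Lform G w v.
Proof. by rewrite /Lsub (LformDr hG) (LformZr hG) rmorphN1 mulN1r. Qed.

Lemma negCS x u : complex.Re (Lform G x x) < 0 -> Lform G u x = 0 ->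
  0 <= complex.Re (Lform G u u).
Proof.
move=> hx hux.
have hxu : Lform G x u = 0 by rewrite (Lform_sym hG) hux rmorph0.
set a := lz x + theta R * ly x; set b := lz u + theta R * ly u.
set v := Lsub (Lscale a u) (Lscale b x).
have hv : lz v + theta R * ly v = 0 by rewrite /v /=; rewrite /a /b; ring.
have := W_pos hv.
have -> : Lform G v v = a * Num.conj a * Lform G u u + b * Num.conj b * Lform G x x.
  rewrite /v !Lsub_expand !Lsub_expandr !LformZl !(LformZr hG) hux hxu; ring.
have [a0|anz] := eqVneq a 0.
  have := W_pos (a0 : lz x + theta R * ly x = 0); lra.
clear hv; clearbody v; clear v; clearbody a b.
move: anz hx; case: a => a1 a2; case: b => b1 b2; case: (Lform G u u) => u1 u2;
  case: (Lform G x x) => x1 x2 /= anz hx.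
move=> h.
have ha : 0 < a1 ^+ 2 + a2 ^+ 2.
  rewrite lt_def addr_ge0 ?sqr_ge0 // andbT; apply: contra anz => /eqP h0.
  have e1 : a1 = 0 by nra.
  have e2 : a2 = 0 by nra.
  by rewrite e1 e2.
have hb : 0 <= b1 ^+ 2 + b2 ^+ 2 by rewrite addr_ge0 ?sqr_ge0.
rewrite leNgt; apply/negP => hu.
have : (a1 ^+ 2 + a2 ^+ 2) * u1 < 0 by rewrite pmulr_rlt0.
have : (b1 ^+ 2 + b2 ^+ 2) * x1 <= 0 by apply: mulr_ge0_le0 hb (ltW hx).
nra.
Qed.

Lemma natC n : (n%:R : C) = (n%:R +i* 0)%C.
Proof. by rewrite complexr0 rmorph_nat. Qed.

Lemma ratio_ge x t p : complex.Re (Lform G x x) < 0 -> Lform G x t = 0 ->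
  Lform G t t = 3%:R -> Lform G p p = - 3%:R ->
  1 + complex.Re (Lform G p t * Lform G t p) / 9%:R <=
  complex.Re (Lform G x p * Lform G p x) /
     (complex.Re (Lform G x x) * complex.Re (Lform G p p)).
Proof.
move=> hx hxt htt hpp.
have htx : Lform G t x = 0 by rewrite (Lform_sym hG) hxt rmorph0.
have hxp : Lform G x p = Num.conj (Lform G p x) by rewrite (Lform_sym hG).
have htp : Lform G t p = Num.conj (Lform G p t) by rewrite (Lform_sym hG).
have hXr : Lform G x x = Num.conj (Lform G x x) by rewrite -(Lform_sym hG).
set X := Lform G x x in hx hXr *; set c := Lform G p x in hxp *;
set d := Lform G p t in htp *.
set u := Lsub (Lsub (Lscale (3%:R * X) p) (Lscale (3%:R * c) x)) (Lscale (X * d) t).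
have hux : Lform G u x = 0.
  rewrite /u !Lsub_expand !LformZl htx -/c -/X; ring.
have := negCS hx hux.
have -> : Lform G u u = 9%:R * X * Num.conj X * Lform G p p - 9%:R * X * Num.conj c * c
   - 9%:R * c * Num.conj X * Num.conj c + 9%:R * c * Num.conj c * X
   - 3%:R * X * Num.conj X * Num.conj d * d - 3%:R * X * Num.conj X * d * Num.conj d
   + X * d * Num.conj X * Num.conj d * 3%:R.
  rewrite /u !Lsub_expand !Lsub_expandr !LformZl !(LformZr hG) !rmorphM /=
     hxt htx htt hxp htp -/c -/d -/X ?rmorph_nat; ring.
rewrite hpp hxp htp; clearbody X c d; clear u hux hxp htp.
move: hx hXr; case: X => x1 x2; case: c => c1 c2; case: d => d1 d2 /= hx.
rewrite !conjE => -[] /eqP; rewrite -subr_eq0 opprK -mulr2n mulrn_eq0 /= => /eqP x20.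
rewrite x20 => h.
have hpos3 : 0 < x1 * - (1 + (1 + 1)) by nra.
rewrite ler_pdivlMr //.
nra.
Qed.
End PA.

End PA.
Import PA.

Module PB.
Set Implicit Arguments. Unset Strict Implicit.
Local Open Scope ring_scope.

Section VV.
Variable R : realType.
Local Notation C := (R[i]).
Variables (G : 'M[C]_12) (lam9 : 'rV[C]_12).
Hypothesis h9 : herm G lam9 lam9 = 9%:R.

Definition V (a y z : C) : Lvec R := mkL (a *: lam9) y z.

Lemma LformV a y z a' y' z' : Lform G (V a y z) (V a' y' z') =
  9%:R * a * Num.conj a' + Num.conj (theta R) * y * Num.conj z' + theta R * z * Num.conj y'.
Proof. rewrite /Lform /= hermZl hermZr h9; ring. Qed.
Lemma LformVl a y z t : Lform G (V a y z) t =
  a * herm G lam9 (lx t) + Num.conj (theta R) * y * Num.conj (lz t) + theta R * z * Num.conj (ly t).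
Proof. by rewrite /Lform /= hermZl. Qed.
Lemma LaddV a y z a' y' z' : Ladd (V a y z) (V a' y' z') = V (a + a') (y + y') (z + z').
Proof. by rewrite /Ladd /V /= scalerDl. Qed.
Lemma LscaleV c a y z : Lscale c (V a y z) = V (c * a) (c * y) (c * z).
Proof. by rewrite /Lscale /V /= scalerA. Qed.
Lemma LsubV a y z a' y' z' : Lsub (V a y z) (V a' y' z') =
   V (a + - 1 * a') (y + - 1 * y') (z + - 1 * z').
Proof. by rewrite /Lsub LscaleV LaddV. Qed.
Lemma rhoV : rho R = V 0 0 1.
Proof. by rewrite /rho /V scale0r. Qed.
Lemma sV : mkL lam9 (theta R) (-1) = V 1 (theta R) (-1).
Proof. by rewrite /V scale1r. Qed.

Definition pp := V (cw (-1) 0) (cw (-1) (-2%:R)) (cw 2%:R 0).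

Lemma pE : nearest_point G (mkL lam9 (theta R) (-1)) = pp.
Proof.
have hc : Lform G (rho R) (mkL lam9 (theta R) (-1)) / 3%:R = cw 1 0.
  by rewrite sV rhoV LformV; cwnorm; congr cw; field.
rewrite /nearest_point hc sV rhoV LscaleV LsubV /pp; congr V; cwnorm; congr cw; ring.
Qed.

Lemma Lpp : Lform G pp pp = - 3%:R.
Proof. by rewrite /pp LformV; cwnorm; congr cw; ring. Qed.

Hypothesis hth : forall u v, inEv u -> inEv v -> exists e, Defs.inE e /\ herm G u v = theta R * e.
Hypothesis hl9 : inEv lam9.

Lemma inE_cw (z : C) : Defs.inE z -> exists a b : int, z = cw a%:~R b%:~R.
Proof. by case=> a [b ->]; exists a, b; rewrite cw_int. Qed.

Lemma pt_int t : inL t -> Lform G pp t != 0 ->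
  3%:R <= complex.Re (Lform G pp t * Num.conj (Lform G pp t)).
Proof.
case=> hx hy hz hnz.
have [e [/inE_cw [a1 [b1 ->]] he]] := hth hl9 hx.
move: hnz; rewrite /pp LformVl he.
have [a2 [b2 ->]] := inE_cw hy; have [a3 [b3 ->]] := inE_cw hz.
set e1 : int := -a1 + a3 + b3 + a2 + a2 - b2 - b2.
set e2 : int := -b1 + a3 + a3 - b3 - b2 - b2.
have -> : cw (-1) 0 * (theta R * cw a1%:~R b1%:~R) +
    Num.conj (theta R) * cw (-1) (- 2%:R) * Num.conj (cw a3%:~R b3%:~R) +
    theta R * cw 2%:R 0 * Num.conj (cw a2%:~R b2%:~R) = theta R * cw e1%:~R e2%:~R.
  rewrite /e1 /e2 !(intrD, intrN); cwnorm; congr cw; ring.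
move=> hnz; clearbody e1 e2.
have hq : (1 <= e1 * e1 - e1 * e2 + e2 * e2)%R.
  have : (e1 != 0) || (e2 != 0).
    apply: contraR hnz; rewrite negb_or !negbK => /andP[/eqP -> /eqP ->].
    by rewrite !mulr0z -cw0 mulr0.
  case/orP => h.
    have : (e1 < 0) || (0 < e1) by rewrite -neq_lt.
    by case/orP => h1; nia.
  have hor : (e2 < 0) || (0 < e2) by rewrite -neq_lt.
  have e4 : 4 * (e1 * e1 - e1 * e2 + e2 * e2) = (2 * e1 - e2) * (2 * e1 - e2) + 3 * (e2 * e2) by ring.
  have hs : 0 <= (2 * e1 - e2) * (2 * e1 - e2) by rewrite -expr2 sqr_ge0.
  have he2 : 1 <= e2 * e2 by case/orP: hor => h1; nia.
  move: e4 hs he2; generalize (e1 * e1 - e1 * e2 + e2 * e2) => q.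
  generalize ((2 * e1 - e2) * (2 * e1 - e2)) => s0; generalize (e2 * e2) => w.
  move=> e4 hs he2.
  have h4 : 0 < 4 * q.
    rewrite e4 ltr_wpDl //; apply: mulr_gt0 => //; exact: lt_le_trans ltr01 he2.
  by move: h4; rewrite pmulr_rgt0.
rewrite -(ler1z R) !(intrD, intrN, intrM) in hq.
cwnorm; rewrite Re_cw; lra.
Qed.
End VV.

End PB.
Import PB.

Module PC.
Set Implicit Arguments. Unset Strict Implicit.
Local Open Scope ring_scope.

Lemma cosh_bounds (R : realType) :
  625%:R / 576%:R <= coshR (3%:R^-1 : R) ^+ 2 /\ coshR (3%:R^-1 : R) ^+ 2 <= 81%:R / 64%:R.
Proof.
rewrite /coshR.
have hu := expR_ge1Dx (3%:R^-1 : R).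
have hv := expR_ge1Dx (- (3%:R^-1 : R)).
have huv : expR (3%:R^-1 : R) * expR (- 3%:R^-1) = 1.
  by rewrite expRN mulfV // gt_eqF // expR_gt0.
set u := expR _ in hu huv *; set v := expR _ in hv huv *.
have h3 : (3%:R^-1 : R) = 1 / 3%:R by rewrite div1r.
rewrite h3 in hu hv.
have hu1 : 4%:R / 3%:R <= u by lra.
have hv1 : 2%:R / 3%:R <= v by lra.
have hu2 : u <= 3%:R / 2%:R by nra.
have hv2 : v <= 3%:R / 4%:R by nra.
have hs : 25%:R / 12%:R <= u + v by nra.
split; nra.
Qed.

End PC.
Import PC.

Module PD.
Set Implicit Arguments. Unset Strict Implicit.
Local Open Scope ring_scope.

Section Conc.
Variable R : realType.
Local Notation C := (R[i]).
Variables (G : 'M[C]_12) (lam9 : 'rV[C]_12).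
Hypothesis h9 : herm G lam9 lam9 = 9%:R.

Definition l0 := V lam9 (cw 0 0) (cw 1 0) (cw 0 (-1)).
Definition x1 := V lam9 (cw (-4) 0) (cw 0 (-8)) (cw 9 (-4)).
Definition y1 := V lam9 (cw (-4) 0) (cw (-5) (-9)) (cw 8 0).
Definition x2 := V lam9 (cw (-13) 1) (cw (-1) (-26)) (cw 29 (-14)).
Definition y2 := V lam9 (cw (-13) 1) (cw (-18) (-30)) (cw 25 (-1)).

Lemma Ll0 : Lform G l0 l0 = 3%:R.
Proof. by rewrite /l0 (LformV h9); cwnorm; congr cw; ring. Qed.
Lemma Lrl0 : Lform G (rho R) l0 * Num.conj (Lform G (rho R) l0) = 3%:R.
Proof. by rewrite (rhoV lam9) /l0 (LformV h9); cwnorm; congr cw; ring. Qed.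

Lemma y1E : triflection G l0 (omega R) x1 = y1.
Proof.
have hc : (1 - omega R) * Lform G x1 l0 / 3%:R = cw 5 1.
  by rewrite /x1 /l0 (LformV h9); cwnorm; congr cw; field.
by rewrite /triflection hc /l0 /x1 LscaleV LsubV /y1; congr V; cwnorm; congr cw; ring.
Qed.
Lemma y2E : triflection G l0 (omega R) x2 = y2.
Proof.
have hc : (1 - omega R) * Lform G x2 l0 / 3%:R = cw 17 4.
  by rewrite /x2 /l0 (LformV h9); cwnorm; congr cw; field.
by rewrite /triflection hc /l0 /x2 LscaleV LsubV /y2; congr V; cwnorm; congr cw; ring.
Qed.

Lemma Re_val (z : C) a b c : z = cw a b -> a - b / 2%:R = c -> complex.Re z = c.
Proof. by move=> -> <-; rewrite Re_cw. Qed.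

Ltac rv := apply: Re_val; [rewrite ?(rhoV lam9) /pp ?(LformV h9); cwnorm; reflexivity | by field].

Lemma x1n : complex.Re (Lform G x1 x1) = -72.
Proof. rv. Qed.
Lemma x1r : complex.Re (Lform G (rho R) x1 * Num.conj (Lform G (rho R) x1)) = 192.
Proof. rv. Qed.
Lemma y1n : complex.Re (Lform G y1 y1) = -72.
Proof. rv. Qed.
Lemma y1r : complex.Re (Lform G (rho R) y1 * Num.conj (Lform G (rho R) y1)) = 183.
Proof. rv. Qed.
Lemma y1p : complex.Re (Lform G y1 (pp lam9) * Lform G (pp lam9) y1) = 228.
Proof. rv. Qed.
Lemma x2n : complex.Re (Lform G x2 x2) = -657.
Proof. rv. Qed.
Lemma x2r : complex.Re (Lform G (rho R) x2 * Num.conj (Lform G (rho R) x2)) = 1953.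
Proof. rv. Qed.
Lemma y2n : complex.Re (Lform G y2 y2) = -657.
Proof. rv. Qed.
Lemma y2p : complex.Re (Lform G y2 (pp lam9) * Lform G (pp lam9) y2) = 2052.
Proof. rv. Qed.
Lemma ppn : complex.Re (Lform G (pp lam9) (pp lam9)) = -3.
Proof. rv. Qed.
Lemma y2s : Lform G y2 (mkL lam9 (theta R) (-1)) = 0.
Proof. by rewrite (sV lam9) /y2 (LformV h9); cwnorm; congr cw; ring. Qed.
End Conc.

End PD.
Import PD.

Local Open Scope ring_scope.
Local Open Scope complex_scope.

Theorem lemma5p4 (R : realType) (G : 'M[R[i]]_12) (lam9 : 'rV[R[i]]_12) :
  is_complex_Leech_gram G ->
  inEv lam9 -> herm G lam9 lam9 = 9%:R ->
  let s := mkL lam9 (theta R) (-1) in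
  let p := nearest_point G s in
  let inB := fun x => negv G x /\ ht G x < ht G p in
  exists r : R, 0 < r /\
    (forall x, chball G p r x ->
       (exists t, is_root G t /\ Lform G x t = 0) ->
       exists t, [/\ is_root G t, Lform G p t = 0 & Lform G x t = 0]) /\
    exists (l : Lvec R) (zeta : R[i]),
      [/\ is_Leech_root G l, zeta = omega R \/ zeta = (omega R)^*,
          (exists y, [/\ inB y, chball G p r y &
               exists x, inB x /\ y = triflection G l zeta x])
        & (exists y, [/\ chball G p r y, Lform G y s = 0 &
               exists x, inB x /\ y = triflection G l zeta x])].
Proof.
move=> [hG hpos hth [hdual1 hdual2] [hmin hex]] hl9 h9 s p inB.
have pE' : p = pp lam9 := pE h9.
have hrho : rho R = V lam9 0 0 1 := rhoV lam9.
have hp : ht G p = 3%:R.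
  rewrite /ht pE' Lpp // hrho (LformV h9); cwnorm; rewrite !Re_cw; by field.
have [cl cu] := cosh_bounds R.
have hr : (2%:R / 3%:R : R) / 2%:R = 3%:R^-1 by field.
exists (2%:R / 3%:R : R).
split; first by rewrite divr_gt0 ?ltr0n.
split.
  move=> x [hxneg hxr] [t [[htL htt] hxt]].
  case: (eqVneq (Lform G p t) 0) => hpt; first by exists t.
  exfalso.
  have hLpp : Lform G p p = - 3%:R by rewrite pE'; exact: Lpp.
  have := ratio_ge hG hpos hxneg hxt htt hLpp.
  rewrite (Lform_sym hG p t).
  have := pt_int hth hl9 htL.
  rewrite -pE' => /(_ hpt) h3.
  rewrite hr in hxr; lra.
have hl0 : inL (l0 lam9).
  split.
  - move=> i; rewrite /= mxE -cw0 mul0r.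
    by exists 0, 0; rewrite mulr0z mul0r addr0.
  - by exists 1, 0; rewrite -cw_int; congr cw; rewrite ?mulr0z ?mulr1z.
  - by exists 0, (-1); rewrite -cw_int; congr cw; rewrite ?mulr0z ?intrN ?mulr1z.
have hB : forall w a b, complex.Re (Lform G (rho R) w * Num.conj (Lform G (rho R) w)) = a ->
    complex.Re (Lform G w w) = b -> b < 0 -> a / b > - 3%:R -> inB w.
  move=> w a b ha hb hb0 hab; split; first by rewrite /negv hb.
  by rewrite hp /ht ha hb mulNr ltrNl.
exists (l0 lam9), (omega R); split.
- split; [split; [exact: hl0 | exact: Ll0 h9] | exact: Lrl0 h9].
- by left.
- exists (y1 lam9); split.
  + apply: hB (y1r h9) (y1n h9) _ _; lra.
  + split; first by rewrite /negv (y1n h9); lra.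
    rewrite pE' (y1p h9) (y1n h9) (ppn h9) hr; lra.
  + exists (x1 lam9); split; last by rewrite (y1E h9).
    apply: hB (x1r h9) (x1n h9) _ _; lra.
- exists (y2 lam9); split.
  + split; first by rewrite /negv (y2n h9); lra.
    rewrite pE' (y2p h9) (y2n h9) (ppn h9) hr; lra.
  + exact: y2s h9.
  + exists (x2 lam9); split; last by rewrite (y2E h9).
    apply: hB (x2r h9) (x2n h9) _ _; lra.
Qed.
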